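(* Let $\mathcal G$ be a finitely generated almost simple group which contains a distortion element, and let $\mathcal H$ be a normal subgroup of $\mathcal G$. Then every homomorphism $\psi:\mathcal H\to\mathbb R$ is trivial.
   Context: A group is almost simple if every normal subgroup is finite or has finite index. For a finitely generated group with finite generating set, $u$ is a distortion element if it has infinite order and $\liminf_{n\to\infty}|u^n|/n=0$, $|\cdot|$ the word length. *)

(* Defs.v *)
From Stdlib Require Import Reals List Arith.
Import ListNotations.
Open Scope R_scope.
Set Implicit Arguments.
Unset Strict Implicit.

Section GroupDefs.
Variables (G : Type) (mul : G -> G -> G) (e : G) (inv : G -> G).

Record is_group : Prop := {
  mul_assoc : forall x y z, mul x (mul y z) = mul (mul x y) z;
  mul_1l : forall x, mul e x = x;
  mul_1r : forall x, mul x e = x;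
  mul_Vl : forall x, mul (inv x) x = e;
  mul_Vr : forall x, mul x (inv x) = e }.

Definition gpow (u : G) (n : nat) : G := Nat.iter n (mul u) e.

Definition is_word (S : list G) (w : list G) : Prop :=
  Forall (fun a => In a S \/ In (inv a) S) w.

Definition eval_word (w : list G) : G := fold_right mul e w.

Definition generates (S : list G) : Prop :=
  forall g, exists w, is_word S w /\ eval_word w = g.

Definition word_length_is (S : list G) (g : G) (n : nat) : Prop :=
  (exists w, is_word S w /\ eval_word w = g /\ length w = n) /\
  (forall w, is_word S w -> eval_word w = g -> (n <= length w)%nat).

Definition infinite_order (u : G) : Prop :=
  forall n, (0 < n)%nat -> gpow u n <> e.

(** u is a distortion element w.r.t. S : infinite order and
    liminf_{n->oo} |u^n|_S / n = 0 (for a nonnegative sequence this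
    means: for every eps > 0 and every N there is n >= N with
    |u^n|_S / n < eps). *)
Definition distortion_element (S : list G) (u : G) : Prop :=
  infinite_order u /\
  forall eps : R, 0 < eps -> forall N : nat, exists n : nat, exists l : nat,
    (N <= n)%nat /\ (0 < n)%nat /\ word_length_is S (gpow u n) l /\
    INR l / INR n < eps.

Definition normal_subgroup (H : G -> Prop) : Prop :=
  H e /\ (forall x y, H x -> H y -> H (mul x y)) /\
  (forall x, H x -> H (inv x)) /\
  (forall g h, H h -> H (mul (mul g h) (inv g))).

Definition finite_subset (H : G -> Prop) : Prop :=
  exists l : list G, forall x, H x -> In x l.

Definition finite_index (H : G -> Prop) : Prop :=
  exists l : list G, forall g, exists t h, In t l /\ H h /\ g = mul t h.

Definition almost_simple : Prop :=
  forall N, normal_subgroup N -> finite_subset N \/ finite_index N.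

(** psi : H -> (R,+) is a homomorphism (psi given as a function on G,
    only its values on H matter). *)
Definition hom_to_R (H : G -> Prop) (psi : G -> R) : Prop :=
  forall x y, H x -> H y -> psi (mul x y) = psi x + psi y.

End GroupDefs.

(* Main.v *)
Require Import Defs.
From Stdlib Require Import Reals List Lia Lra Classical ClassicalEpsilon.
Open Scope R_scope.


Lemma pigeon (X : Type) (f : nat -> X) (l : list X) :
  (forall n, In (f n) l) -> exists i j, (i < j)%nat /\ f i = f j.
Proof.
  intros Hf. apply NNPP; intros Hno.
  set (L := map f (seq 0 (S (length l)))).
  assert (HL : NoDup L).
  { apply (proj2 (NoDup_nth L (f 0%nat))).
    intros i j Hi Hj Heq. unfold L in *. rewrite length_map, length_seq in Hi, Hj.
    rewrite !map_nth, !seq_nth in Heq by lia. simpl in Heq.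
    destruct (Nat.lt_trichotomy i j) as [h|[h|h]]; auto;
      exfalso; apply Hno; eauto. }
  assert (Hi : incl L l).
  { intros x Hx. unfold L in Hx. apply in_map_iff in Hx. destruct Hx as [n [<- _]]. auto. }
  pose proof (NoDup_incl_length HL Hi) as Hlen. unfold L in Hlen.
  rewrite length_map, length_seq in Hlen. lia.
Qed.

Lemma fin_bound (X : Type) (P : X -> R -> Prop) (L : list X) :
  (forall x b b', P x b -> b <= b' -> P x b') ->
  (forall x, In x L -> exists b, P x b) ->
  exists B, 0 <= B /\ forall x, In x L -> P x B.
Proof.
  intros Hmono. induction L as [|a L IH]; intros Hall.
  - exists 0. split; [lra| intros x []].
  - destruct IH as [B [HB0 HB]]. { intros x Hx; apply Hall; simpl; auto. }
    destruct (Hall a (or_introl eq_refl)) as [b Hb].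
    exists (Rmax B (Rmax b 0)). split.
    + apply Rle_trans with (Rmax b 0); apply Rmax_r.
    + intros x [<-|Hx].
      * apply Hmono with b; auto. apply Rle_trans with (Rmax b 0); [apply Rmax_l|apply Rmax_r].
      * apply Hmono with B; auto. apply Rmax_l.
Qed.

Fixpoint wpow {A : Type} (w : list A) (k : nat) : list A :=
  match k with O => nil | S k => w ++ wpow w k end.

Theorem lemma7p2 (G : Type) (mul : G -> G -> G) (e : G) (inv : G -> G)
  (Hgrp : is_group mul e inv)
  (S : list G) (HS : generates mul e inv S)
  (Halmost : almost_simple mul e inv)
  (u : G) (Hu : distortion_element mul e inv S u)
  (H : G -> Prop) (HN : normal_subgroup mul e inv H)
  (psi : G -> R) (Hpsi : hom_to_R mul H psi) :
  forall x, H x -> psi x = 0.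
Proof.
  destruct Hgrp as [assoc m1l m1r mVl mVr].
  assert (assoc' : forall x y z, mul (mul x y) z = mul x (mul y z)) by (intros; now rewrite assoc).
  assert (cVl : forall x y, mul (inv x) (mul x y) = y) by (intros; rewrite assoc, mVl, m1l; auto).
  assert (cVr : forall x y, mul x (mul (inv x) y) = y) by (intros; rewrite assoc, mVr, m1l; auto).
  assert (lcancel : forall a b c, mul a b = mul a c -> b = c).
  { intros a b c Hab. rewrite <- (cVl a b), Hab, cVl; auto. }
  assert (inv_uniq : forall x y, mul x y = e -> y = inv x).
  { intros x y Hxy. rewrite <- (cVl x y), Hxy, m1r; auto. }
  assert (inv_mul : forall x y, inv (mul x y) = mul (inv y) (inv x)).
  { intros x y. symmetry; apply inv_uniq. rewrite assoc', cVr, mVr; auto. }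
  assert (inv_inv : forall x, inv (inv x) = x).
  { intros x. symmetry; apply inv_uniq. apply mVl. }
  assert (inv_e : inv e = e).
  { symmetry; apply inv_uniq. apply m1l. }
  destruct HN as [He [Hmul [Hinv Hconj]]].
  assert (psi_e : psi e = 0).
  { pose proof (Hpsi e e He He) as h. rewrite m1l in h. lra. }
  assert (psi_inv : forall x, H x -> psi (inv x) = - psi x).
  { intros x Hx. pose proof (Hpsi (inv x) x (Hinv x Hx) Hx) as h. rewrite mVl, psi_e in h. lra. }
  assert (gpow_add : forall a n m, gpow mul e a (n + m) = mul (gpow mul e a n) (gpow mul e a m)).
  { intros a n m. induction n; simpl. rewrite m1l; auto. unfold gpow in *. simpl. rewrite IHn, assoc; auto. }
  assert (gpow_mul : forall a n m, gpow mul e (gpow mul e a n) m = gpow mul e a (m * n)).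
  { intros a n m. induction m; simpl. auto. rewrite gpow_add. unfold gpow in *; simpl. rewrite IHm; auto. }
  assert (gpow_P : forall P : G -> Prop, P e -> (forall x y, P x -> P y -> P (mul x y)) ->
     forall a n, P a -> P (gpow mul e a n)).
  { intros P P1 P2 a n Pa. induction n; simpl; auto. }
  assert (psi_pow : forall a n, H a -> psi (gpow mul e a n) = INR n * psi a).
  { intros a n Ha. induction n. simpl. rewrite psi_e; lra.
    change (gpow mul e a (Datatypes.S n)) with (mul a (gpow mul e a n)).
    rewrite Hpsi, IHn, S_INR by (auto; apply gpow_P; auto). lra. }
  assert (gpow_conj : forall g a n, gpow mul e (mul (mul g a) (inv g)) n = mul (mul g (gpow mul e a n)) (inv g)).
  { intros g a n. induction n; simpl. rewrite m1r, mVr; auto.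
    unfold gpow in *; simpl. rewrite IHn. rewrite !assoc'. rewrite cVl. auto. }
  assert (pow_zero : forall x m, H x -> (0 < m)%nat -> psi (gpow mul e x m) = 0 -> psi x = 0).
  { intros x m Hx Hm h. rewrite psi_pow in h by auto.
    assert (INR m <> 0) by (apply not_0_INR; lia). apply Rmult_integral in h. tauto. }
  assert (coset_pig : forall (P : G -> Prop) (l : list G),
     (forall g, exists t h, In t l /\ P h /\ g = mul t h) ->
     forall a, exists m, (0 < m)%nat /\ exists h1 h2, P h1 /\ P h2 /\ gpow mul e a m = mul (inv h1) h2).
  { intros P l Hc a.
    set (f := fun n => proj1_sig (constructive_indefinite_description _ (Hc (gpow mul e a n)))).
    assert (Hf : forall n, exists h, In (f n) l /\ P h /\ gpow mul e a n = mul (f n) h).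
    { intros n. unfold f. destruct (constructive_indefinite_description _ _) as [t Ht]. simpl.
      destruct Ht as [h Ht]; exists h; tauto. }
    destruct (pigeon _ f l) as [i [j [Hij Hfij]]].
    { intros n. destruct (Hf n) as [h Hh]; tauto. }
    exists (j - i)%nat. split. lia.
    destruct (Hf i) as [h1 [_ [P1 E1]]]. destruct (Hf j) as [h2 [_ [P2 E2]]].
    exists h1, h2. split; auto. split; auto.
    assert (Ej : gpow mul e a j = mul (gpow mul e a i) (gpow mul e a (j - i))).
    { rewrite <- gpow_add. f_equal. lia. }
    rewrite Ej, E1, Hfij, assoc' in E2.
    apply lcancel in E2. rewrite <- E2, cVl. auto. }
  assert (HNs : normal_subgroup mul e inv H) by (repeat split; auto).
  destruct (Halmost H HNs) as [Hfin | Hfi].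
  - intros x Hx. destruct Hfin as [l Hl].
    destruct (pigeon _ (gpow mul e x) l) as [i [j [Hij Hfij]]].
    { intros n. apply Hl. apply gpow_P; auto. }
    apply (pow_zero x (j - i)%nat Hx ltac:(lia)).
    replace j with (i + (j - i))%nat in Hfij by lia. rewrite gpow_add in Hfij.
    rewrite <- (m1r (gpow mul e x i)) in Hfij at 1. apply lcancel in Hfij.
    rewrite <- Hfij. auto.
  - set (K := fun h => H h /\ forall g, psi (mul (mul g h) (inv g)) = 0).
    assert (HK : normal_subgroup mul e inv K).
    { split; [|split; [|split]].
      - split; auto. intros g. rewrite m1r, mVr; auto.
      - intros x y [Hx Kx] [Hy Ky]. split; auto. intros g.
        replace (mul (mul g (mul x y)) (inv g)) with
          (mul (mul (mul g x) (inv g)) (mul (mul g y) (inv g))).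
        rewrite Hpsi, Kx, Ky by auto. lra.
        rewrite !assoc', cVl. auto.
      - intros x [Hx Kx]. split; auto. intros g.
        replace (mul (mul g (inv x)) (inv g)) with (inv (mul (mul g x) (inv g))).
        rewrite psi_inv, Kx by auto. lra.
        rewrite !inv_mul, inv_inv, assoc. auto.
      - intros g h [Hh Kh]. split; auto. intros g'.
        replace (mul (mul g' (mul (mul g h) (inv g))) (inv g')) with
           (mul (mul (mul g' g) h) (inv (mul g' g))).
        apply Kh. rewrite inv_mul, !assoc'. auto. }
    assert (Kpow : forall a n, K a -> K (gpow mul e a n)).
    { intros a n Ka. apply gpow_P; auto; apply HK. }
    destruct (Halmost K HK) as [Kfin | Kfi].
    +
      exfalso. destruct Hu as [Hinf Hdist]. destruct Hfi as [l Hl].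
      destruct (coset_pig H l Hl u) as [k [Hk [h1 [h2 [H1 [H2 Ek]]]]]].
      set (v := gpow mul e u k).
      assert (Hv : H v) by (unfold v; rewrite Ek; auto).
      assert (Kv : K v).
      { split; auto. intros g. apply NNPP. intros Hc0.
set (a := mul (mul g v) (inv g)). set (c := psi a). fold a in Hc0.
        assert (Ha : H a) by (apply Hconj; auto).
        destruct (fin_bound G (fun s b => forall t, In t l -> exists t' h', In t' l /\ H h' /\
                     mul s t = mul t' h' /\ Rabs (psi h') <= b) (S ++ map inv S)) as [B [HB0 HB]].
        { intros x b b' Hb Hbb t Ht. destruct (Hb t Ht) as [t' [h' Hh]].
          exists t', h'. repeat split; try tauto. lra. }
        { intros s _. destruct (fin_bound G (fun t b => In t l -> exists t' h', In t' l /\ H h' /\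
                     mul s t = mul t' h' /\ Rabs (psi h') <= b) l) as [b [_ Hb]].
          { intros t b b' Hb Hbb Ht. destruct (Hb Ht) as [t' [h' Hh]].
            exists t', h'. repeat split; try tauto. lra. }
          { intros t _. destruct (Hl (mul s t)) as [t' [h' Hh]]. exists (Rabs (psi h')).
            intros _. exists t', h'. repeat split; try tauto. lra. }
          exists b. intros t Ht. apply Hb; auto. }
        destruct (Hl e) as [te [he [Hte [Hhe Ee]]]].
        set (A := Rabs (psi he)).
        assert (Hword : forall w, is_word inv S w -> exists t h, In t l /\ H h /\
                  eval_word mul e w = mul t h /\ Rabs (psi h) <= A + B * INR (length w)).
        { induction w as [|s w IH]; intros Hw.
          - exists te, he. simpl. repeat split; auto. unfold A; lra.
          - apply Forall_cons_iff in Hw as [Hs Hw'].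
            destruct (IH Hw') as [t [h [Ht [Hh [Ew Hb]]]]].
            assert (HsL : In s (S ++ map inv S)).
            { apply in_or_app. destruct Hs as [Hs|Hs]; auto. right.
              rewrite <- (inv_inv s). apply in_map; auto. }
            destruct (HB s HsL t Ht) as [t' [h' [Ht' [Hh' [Es Hb']]]]].
            exists t', (mul h' h). split; auto. split; auto. split.
            + simpl. fold (eval_word mul e w). rewrite Ew, assoc, Es, assoc'. auto.
            + rewrite Hpsi by auto. simpl length. rewrite S_INR.
              pose proof (Rabs_triang (psi h') (psi h)). nra. }
        destruct (fin_bound G (fun t b => forall t', In t' l -> H (mul (inv t') t) ->
                     Rabs (psi (mul (inv t') t)) <= b) l) as [E [HE0 HE]].
        { intros x b b' Hb Hbb t' Ht' Hd. specialize (Hb t' Ht' Hd). lra. }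
        { intros t _. destruct (fin_bound G (fun t' b => H (mul (inv t') t) ->
                     Rabs (psi (mul (inv t') t)) <= b) l) as [b [_ Hb]].
          { intros x b b' Hb Hbb Hd. specialize (Hb Hd). lra. }
          { intros t' _. destruct (classic (H (mul (inv t') t))) as [Hd|Hd].
            - exists (Rabs (psi (mul (inv t') t))). intros _; lra.
            - exists 0. intros Hd'; tauto. }
          exists b. intros t' Ht'. apply Hb; auto. }
        assert (Huniq : forall t t' h h', In t l -> In t' l -> H h -> H h' -> mul t h = mul t' h' ->
                  Rabs (psi h - psi h') <= E).
        { intros t t' h h' Ht Ht' Hh Hh' Eq.
          assert (Ed : mul (mul (inv t') t) h = h') by (rewrite assoc', Eq, cVl; auto).
          assert (Ed2 : mul (inv t') t = mul h' (inv h)) by (rewrite <- Ed, assoc', mVr, m1r; auto).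
          assert (Hd : H (mul (inv t') t)) by (rewrite Ed2; auto).
          specialize (HE t Ht t' Ht' Hd). rewrite <- Ed, Hpsi by auto.
          replace (psi h - (psi (mul (inv t') t) + psi h)) with (- psi (mul (inv t') t)) by ring.
          rewrite Rabs_Ropp. auto. }
        destruct (HS (inv g)) as [wg [Hwg Ewg]].
        destruct (Hl (inv g)) as [t0 [h0 [Ht0 [Hh0 E0]]]].
        set (C0 := E + Rabs (psi h0) + A + B * INR (length wg)).
        assert (Hc : 0 < Rabs c) by (apply Rabs_pos_lt; auto).
        assert (HBk : 0 <= B * INR k) by (apply Rmult_le_pos; auto; apply pos_INR).
        set (eps := Rabs c / (2 * (B * INR k + 1))).
        assert (Heps : 0 < eps) by (unfold eps; apply Rdiv_lt_0_compat; lra).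
        destruct (INR_archimed (Rabs c) (2 * C0) Hc) as [N0 HN0].
        destruct (Hdist eps Heps N0) as [N [lN [HNN0 [HN0' [[[w [Hw [Ew Lw]]] _] Hratio]]]]].
        set (W := wpow w k ++ wg).
        assert (HwW : is_word inv S W).
        { unfold W, is_word. apply Forall_app. split; auto. clear -Hw.
          induction k; simpl; [constructor|]. apply Forall_app; auto. }
        assert (eval_app : forall w1 w2, eval_word mul e (w1 ++ w2) = mul (eval_word mul e w1) (eval_word mul e w2)).
        { intros w1 w2. induction w1; simpl. rewrite m1l; auto. fold (eval_word mul e (w1 ++ w2)).
          fold (eval_word mul e w1). rewrite IHw1, assoc; auto. }
        assert (eval_wpow : forall w n, eval_word mul e (wpow w n) = gpow mul e (eval_word mul e w) n).
        { intros w1 n. induction n; simpl; auto. rewrite eval_app, IHn. auto. }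
        assert (len_wpow : forall (w : list G) n, length (wpow w n) = (n * length w)%nat).
        { intros w1 n. induction n; simpl; auto. rewrite length_app, IHn. auto. }
        assert (EW : eval_word mul e W = mul t0 (mul h0 (gpow mul e a N))).
        { unfold W. rewrite eval_app, eval_wpow, Ew, Ewg, gpow_mul.
          unfold a. rewrite gpow_conj. unfold v. rewrite gpow_mul.
          rewrite (assoc t0), <- E0, !assoc', cVl, Nat.mul_comm. auto. }
        destruct (Hword W HwW) as [t [h [Ht [Hh [EW' HbW]]]]].
        rewrite EW in EW'.
        assert (HaN : H (gpow mul e a N)) by (apply gpow_P; auto).
        pose proof (Huniq t0 t _ h Ht0 Ht (Hmul _ _ Hh0 HaN) Hh EW') as Hu1.
        rewrite Hpsi, psi_pow in Hu1 by auto. fold c in Hu1.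
        unfold W in HbW. rewrite length_app, len_wpow, plus_INR, mult_INR, Lw in HbW.
        assert (HlN : INR lN < eps * INR N).
        { assert (0 < INR N) by (apply lt_0_INR; lia).
          apply (Rmult_lt_compat_r (INR N)) in Hratio; auto.
          unfold Rdiv in Hratio. rewrite Rmult_assoc, Rinv_l in Hratio by lra. lra. }
        assert (HNc : INR N * Rabs c <= C0 + B * INR k * INR lN).
        { unfold C0. 
          pose proof (Rabs_triang (psi h0 + INR N * c - psi h) (psi h - psi h0)) as T1.
          replace (psi h0 + INR N * c - psi h + (psi h - psi h0)) with (INR N * c) in T1 by ring.
          rewrite Rabs_mult, Rabs_pos_eq in T1 by apply pos_INR.
          pose proof (Rabs_triang (psi h) (- psi h0)) as T2.
          rewrite Rabs_Ropp in T2. unfold Rminus in *. lra. }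
        assert (Hkl : B * INR k * INR lN <= INR N * Rabs c / 2).
        { apply Rle_trans with (B * INR k * (eps * INR N)).
          apply Rmult_le_compat_l; auto; lra.
          unfold eps. apply Rle_trans with ((B * INR k) / (B * INR k + 1) * (INR N * Rabs c) / 2).
          right. field. lra.
          assert (Hf : B * INR k / (B * INR k + 1) <= 1).
          { apply (Rmult_le_reg_r (B * INR k + 1)). lra. field_simplify; lra. }
          assert (0 <= INR N * Rabs c) by (apply Rmult_le_pos; [apply pos_INR|lra]).
          unfold Rdiv. nra. }
        assert (INR N0 <= INR N) by (apply le_INR; auto).
        nra. }
      destruct Kfin as [lK HlK].
      destruct (pigeon _ (gpow mul e v) lK) as [i [j [Hij Hfij]]].
      { intros n. apply HlK. apply Kpow; auto. }
      apply (Hinf ((j - i) * k)%nat). nia.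
      rewrite <- gpow_mul. fold v.
      assert (Ej : gpow mul e v j = mul (gpow mul e v i) (gpow mul e v (j - i))).
      { rewrite <- gpow_add. f_equal. lia. }
      rewrite Ej in Hfij.
      rewrite <- (m1r (gpow mul e v i)) in Hfij at 1. apply lcancel in Hfij. auto.
    + intros x Hx.
      destruct Kfi as [lK HlK].
      destruct (coset_pig K lK HlK x) as [m [Hm [h1 [h2 [K1 [K2 Em]]]]]].
      apply (pow_zero x m Hx Hm).
      assert (Km : K (gpow mul e x m)) by (rewrite Em; apply HK; auto; apply HK; auto).
      destruct Km as [_ Km]. specialize (Km e). rewrite m1l, inv_e, m1r in Km. auto.
Qed.
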